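(* For every set $A$ of positive integers with $1\in A$ and every $n\ge 0$, $\mathrm{Total}(n,A)=G(n,A)$; that is, the maximum total value of a reachable position in the $n$-cell abstract generalized 2048 game with tile values $A$ equals the smallest nonnegative integer for which the greedy change-making algorithm with coin values $A$ uses $n$ or more coins (both sides being $\infty$ simultaneously when no such integer exists).
   Context: For an integer $n\ge 0$, the abstract generalized 2048 game $\mathrm{AGG}(n,A)$ is played on $n$ indistinguishable cells. A position assigns to each cell either nothing (the cell is empty) or a tile carrying a value in $A$. The initial position has all cells empty. A step, which can be performed from any position having at least one empty cell, consists of: (i) placing a new tile of value $1$ into a chosen empty cell; then (ii) optionally choosing any collection of pairwise disjoint sets of nonempty cells such that the sum of the tile values in each chosen set belongs to $A$, and merging each chosen set into a single tile, whose value is that sum, placed in one cell of the set, the other cells of the set becoming empty. The game ends when, after a step, all cells are nonempty (no further step is then possible). A position is reachable if it can be obtained from the initial position by a finite sequence of steps; its total value is the sum of its tile values. $\mathrm{Total}(n,A)$ is the supremum (possibly $\infty$) of the total values of reachable positions of $\mathrm{AGG}(n,A)$ ($\mathrm{Total}(0,A)=0$). The greedy change-making algorithm with coin values $A$, applied to a nonnegative integer $s$, uses no coins if $s=0$, and otherwise selects the largest $c\in A$ with $c\le s$ and then recursively makes change for $s-c$; the number of coins used is the number of selections. $G(n,A)$ is the smallest nonnegative integer $s$ for which this algorithm uses at least $n$ coins ($\infty$ if none exists). *)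

(* Defs.v *)
From mathcomp Require Import all_boot.
Set Implicit Arguments. Unset Strict Implicit. Unset Printing Implicit Defensive.

(* A set of coin / tile values is a predicate A : nat -> Prop (possibly infinite,
   possibly undecidable). *)

(* Cells are indistinguishable, so a position is the multiset of values of the
   nonempty cells, represented by a list (order irrelevant); the number of empty
   cells is n - size p. *)

(* One step from p to q: there is an empty cell (size p < n); a tile 1 is placed,
   giving the tiles 1 :: p; then the tiles are partitioned into groups, each group
   being either a single untouched tile or a chosen set whose sum lies in A, and
   each group is merged into one tile whose value is its sum. *)
Definition agg_step (n : nat) (A : nat -> Prop) (p q : seq nat) : Prop :=
  size p < n /\
  exists gs : seq (seq nat),
    [/\ perm_eq (flatten gs) (1 :: p),
        (forall g, g \in gs -> g != [::] /\ (size g = 1 \/ A (sumn g)))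
      & q = map sumn gs].

Inductive agg_reachable (n : nat) (A : nat -> Prop) : seq nat -> Prop :=
  | agg_reach0 : agg_reachable n A [::]
  | agg_reachS p q : agg_reachable n A p -> agg_step n A p q -> agg_reachable n A q.

(* Total(n, A) = v, where v = Some t means the supremum is the finite value t and
   v = None means the supremum is infinity. *)
Definition Total_is (n : nat) (A : nat -> Prop) (v : option nat) : Prop :=
  match v with
  | Some t => (forall p, agg_reachable n A p -> sumn p <= t) /\
              (forall u, (forall p, agg_reachable n A p -> sumn p <= u) -> t <= u)
  | None => forall u, exists p, agg_reachable n A p /\ u < sumn p
  end.

Inductive greedy_coins (A : nat -> Prop) : nat -> nat -> Prop :=
  | greedy0 : greedy_coins A 0 0
  | greedyS s c k :
      0 < s -> A c -> c <= s -> (forall c', A c' -> c' <= s -> c' <= c) ->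
      greedy_coins A (s - c) k -> greedy_coins A s k.+1.

Definition greedy_uses_at_least (A : nat -> Prop) (s n : nat) : Prop :=
  exists k, greedy_coins A s k /\ n <= k.

(* G(n, A) = v, with v = None meaning infinity. *)
Definition G_is (n : nat) (A : nat -> Prop) (v : option nat) : Prop :=
  match v with
  | Some s => greedy_uses_at_least A s n /\
              (forall s', s' < s -> ~ greedy_uses_at_least A s' n)
  | None => forall s, ~ greedy_uses_at_least A s n
  end.

(* Main.v *)
Require Import Defs.
From mathcomp Require Import all_boot.
From Stdlib Require Import Classical.
Set Implicit Arguments. Unset Strict Implicit. Unset Printing Implicit Defensive.

Definition okgs (A : nat -> Prop) (gs : seq (seq nat)) :=
  forall g, g \in gs -> g != [::] /\ (size g = 1 \/ A (sumn g)).

Definition pmerge (A : nat -> Prop) (q p : seq nat) :=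
  exists gs, [/\ perm_eq (flatten gs) q, okgs A gs & perm_eq p (map sumn gs)].

Lemma PM (T1 T2 : eqType) (f : T1 -> T2) (s : seq T2) (l : seq T1) :
  perm_eq s (map f l) -> exists l', perm_eq l l' /\ map f l' = s.
Proof.
elim: s l => [|x s IH] l H.
  move: H; rewrite perm_sym => /perm_nilP; case: l => // _; by exists [::].
have : x \in map f l by rewrite -(perm_mem H) mem_head.
case/mapP=> y yl Ex; subst x.
have Hl := perm_to_rem yl.
have : perm_eq s (map f (rem y l)).
  by rewrite -(perm_cons (f y)); apply: (perm_trans H); exact: (perm_map f Hl).
case/IH=> l'' [H1 H2]; exists (y :: l''); split; last by rewrite /= H2.
by apply: (perm_trans Hl); rewrite perm_cons.
Qed.

Arguments PM {T1 T2 f s l}.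

Lemma psym (T : eqType) (s t : seq T) : perm_eq s t -> perm_eq t s.
Proof. by rewrite perm_sym. Qed.

Lemma okgs_sub A gs hs : okgs A hs -> {subset gs <= hs} -> okgs A gs.
Proof. by move=> H S g /S /H. Qed.

Lemma SPLIT A (gs hs : seq (seq nat)) :
  map sumn hs = flatten gs -> okgs A hs -> okgs A gs ->
  exists ks, [/\ flatten ks = flatten hs, map sumn ks = map sumn gs & okgs A ks].
Proof.
elim: gs hs => [|g gs IH] hs Hm Hh Hg.
  case: hs Hm {Hh} => // _; by exists [::]; split=> // k.
set c := take (size g) hs; set d := drop (size g) hs.
have Hc : map sumn c = g by rewrite /c map_take Hm /= take_size_cat.
have Hd : map sumn d = flatten gs by rewrite /d map_drop Hm /= drop_size_cat.
have [ks0 [F0 M0 O0]] := IH d Hd (okgs_sub Hh (fun x => @mem_drop _ _ _ x))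
   (okgs_sub Hg (fun x xi => mem_behead xi)).
exists (flatten c :: ks0); split.
- by rewrite /= F0 -flatten_cat cat_take_drop.
- by rewrite /= M0 sumn_flatten Hc.
move=> k; rewrite inE => /orP [/eqP -> | /O0 //].
have [gn gc] := Hg g (mem_head _ _).
have cs : {subset c <= hs} by move=> x; apply: mem_take.
clearbody c; split.
  move: gn cs; rewrite -Hc; case: c {Hc} => // h c' _ cs.
  have [hn _] := Hh h (cs h (mem_head _ _)).
  by clear cs; case: h hn.
case: gc => [g1 | Ag]; last by right; rewrite sumn_flatten Hc.
move: g1 cs; rewrite -Hc size_map; case: c {Hc} => [|h [|]] //= _ cs.
by rewrite cats0; have [_ ] := Hh h (cs h (mem_head _ _)).
Qed.

Lemma okgs_perm A gs gs' : perm_eq gs gs' -> okgs A gs -> okgs A gs'.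
Proof. by move=> P H g; rewrite -(perm_mem P); apply: H. Qed.

Lemma pmerge_perm A q q' p : perm_eq q q' -> pmerge A q p -> pmerge A q' p.
Proof. by move=> P [gs [F O E]]; exists gs; split=> //; apply: perm_trans F P. Qed.

Lemma flatten_nil A gs : okgs A gs -> flatten gs = [::] -> gs = [::].
Proof.
case: gs => // g gs O; have [gn _] := O g (mem_head _ _).
by case: g gn {O}.
Qed.

Lemma reach_perm A n p p' :
  agg_reachable n A p -> perm_eq p p' -> agg_reachable n A p'.
Proof.
case=> [| q p0 Hq [Hs [gs [F O ->]]]] P.
  by move: P; rewrite perm_sym => /perm_nilP ->; constructor.
have [gs' [P1 P2]] := PM (psym P).
apply: (agg_reachS Hq); split=> //; exists gs'; split=> //.
- by apply: perm_trans F; rewrite perm_sym; apply: perm_flatten.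
- by move=> g; rewrite -(perm_mem P1); apply: O.
Qed.

Lemma reach_step A n q p :
  agg_reachable n A q -> size q < n -> pmerge A (1 :: q) p -> agg_reachable n A p.
Proof.
move=> Hq Hs [gs [F O E]].
apply: (reach_perm _ (psym E)); apply: (agg_reachS Hq); split=> //.
by exists gs.
Qed.

Lemma merge_reach A n q p :
  agg_reachable n A q -> pmerge A q p -> agg_reachable n A p.
Proof.
case=> [| r q0 Hr [Hs [hs [F O ->]]]] [gs [F' O' E']].
  move: F' => /perm_nilP /(flatten_nil O') Eg; subst gs.
  by move: E' => /perm_nilP ->; constructor.
have [hs' [P1 P2]] := PM F'.
have [ks [K1 K2 K3]] := SPLIT P2 (okgs_perm P1 O) O'.
apply: (reach_step Hr Hs); exists ks; split=> //.
  by rewrite K1; apply: perm_trans F; rewrite perm_sym; apply: perm_flatten.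
by rewrite K2.
Qed.

Lemma sub_reach A n q : agg_reachable n A q ->
  forall q' w, perm_eq q (q' ++ w) -> agg_reachable n A q'.
Proof.
elim=> [| r q0 Hr IH [Hs [hs [F O ->]]]] q' w P.
  move: P; rewrite perm_sym => /perm_nilP.
  by case: q' => // _; constructor.
have [hs' [P1 P2]] := PM (psym P).
set hs1 := take (size q') hs'; set hs2 := drop (size q') hs'.
have M1 : map sumn hs1 = q' by rewrite /hs1 map_take P2 take_size_cat.
have O1 : okgs A hs1 by apply: okgs_sub (okgs_perm P1 O) _ => x; apply: mem_take.
have E : perm_eq (1 :: r) (flatten hs1 ++ flatten hs2).
  rewrite -flatten_cat cat_take_drop perm_sym; apply: perm_trans F.
  by rewrite perm_sym; apply: perm_flatten.
case: (boolP (1 \in flatten hs1)) => H1.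
  have E1 := perm_to_rem H1.
  have E2 : perm_eq r (rem 1 (flatten hs1) ++ flatten hs2).
    rewrite -(perm_cons 1); apply: (perm_trans E).
    by rewrite -cat_cons perm_cat2r.
  apply: (reach_step (IH _ _ E2)).
    rewrite (perm_size E2) size_cat in Hs; apply: leq_ltn_trans Hs; exact: leq_addr.
  by exists hs1; split=> //; rewrite M1.
have H2 : 1 \in flatten hs2.
  by move: (perm_mem E 1); rewrite mem_head mem_cat (negbTE H1) /= => <-.
have E2 : perm_eq r (flatten hs1 ++ rem 1 (flatten hs2)).
  rewrite -(perm_cons 1); apply: (perm_trans E).
  rewrite perm_sym -[1 :: _]cat1s perm_catCA perm_cat2l perm_sym.
  exact: perm_to_rem H2.
apply: (merge_reach (IH _ _ E2)).
by exists hs1; split=> //; rewrite M1.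
Qed.

Lemma substep A m r0 Y W p' :
  agg_reachable m A r0 -> size r0 < m -> perm_eq (1 :: r0) (Y ++ W) ->
  pmerge A Y p' -> agg_reachable m A p'.
Proof.
move=> Hr Hs E Hp.
case: (boolP (1 \in Y)) => H1.
  have E1 := perm_to_rem H1.
  have E2 : perm_eq r0 (rem 1 Y ++ W).
    rewrite -(perm_cons 1); apply: (perm_trans E).
    by rewrite -cat_cons perm_cat2r.
  apply: (reach_step (sub_reach Hr E2)).
    rewrite (perm_size E2) size_cat in Hs; apply: leq_ltn_trans Hs; exact: leq_addr.
  exact: pmerge_perm E1 Hp.
have H2 : 1 \in W.
  by move: (perm_mem E 1); rewrite mem_head mem_cat (negbTE H1) /= => <-.
have E2 : perm_eq r0 (Y ++ rem 1 W).
  rewrite -(perm_cons 1); apply: (perm_trans E).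
  rewrite perm_sym -[1 :: _]cat1s perm_catCA perm_cat2l perm_sym.
  exact: perm_to_rem H2.
exact: merge_reach (sub_reach Hr E2) Hp.
Qed.

Lemma rexists A n p : agg_reachable n A p -> p != [::] ->
  exists y r, perm_eq p (y :: r) /\ agg_reachable n.-1 A r.
Proof.
elim=> [|q p0 Hq IH [Hs [gs [F O ->]]]] // _.
have [z [X [EX HX]]] : exists z X, perm_eq (1 :: q) (z :: X) /\
   (forall Y W p', perm_eq X (Y ++ W) -> pmerge A Y p' -> agg_reachable n.-1 A p').
  case: (eqVneq q [::]) => [->|qn].
    exists 1, [::]; split=> // Y W p' E Hp.
    move: E; rewrite perm_sym => /perm_nilP; case: Y Hp => // Hp _.
    exact: merge_reach (agg_reach0 _ _) Hp.
  have [y0 [r0 [E0 R0]]] := IH qn.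
  exists y0, (1 :: r0); split.
    apply: (perm_trans (_ : perm_eq (1 :: q) ([:: 1] ++ [:: y0] ++ r0))).
      by rewrite /= perm_cons.
    rewrite perm_catCA; exact: perm_refl.
  move=> Y W p' E Hp; apply: (substep R0 _ E Hp).
  by rewrite (perm_size E0) /= in Hs; case: n Hs {IH Hq R0}.
have : z \in flatten gs by rewrite (perm_mem F) (perm_mem EX) mem_head.
case/flattenP=> h hg zh.
have Hg := perm_to_rem hg; have Hh := perm_to_rem zh.
have E : perm_eq X (flatten (rem h gs) ++ rem z h).
  rewrite -(perm_cons z) perm_sym; apply: (perm_trans _ EX).
  apply: (perm_trans _ F); apply: (perm_trans _ (perm_flatten (psym Hg))).
  apply: (perm_trans (_ : perm_eq _ ((z :: rem z h) ++ flatten (rem h gs)))).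
    rewrite /= perm_cons perm_catC; exact: perm_refl.
  change (perm_eq ((z :: rem z h) ++ flatten (rem h gs)) (h ++ flatten (rem h gs))).
  rewrite perm_cat2r; exact: psym Hh.
exists (sumn h), (map sumn (rem h gs)); split.
  exact: (perm_map sumn Hg).
apply: (HX _ _ _ E); exists (rem h gs); split=> //.
apply: okgs_sub O _ => x; exact: mem_rem.
Qed.

Lemma allA A n p : A 1 -> agg_reachable n A p -> forall x, x \in p -> A x.
Proof.
move=> A1; elim=> [|q p0 Hq IH [Hs [gs [F O ->]]]] // x /mapP [g gg ->].
have [gn [g1 | //]] := O g gg.
case: g g1 gg gn => [|y [|]] //= _ gg _; rewrite addn0.
have : y \in 1 :: q by rewrite -(perm_mem F); apply/flattenP; exists [:: y]; rewrite ?mem_head.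
by rewrite inE => /orP [/eqP -> // | /IH].
Qed.

Inductive gl (A : nat -> Prop) : nat -> seq nat -> Prop :=
| gl0 : gl A 0 [::]
| glS s c l : 0 < s -> A c -> c <= s -> (forall c', A c' -> c' <= s -> c' <= c) ->
    gl A (s - c) l -> gl A s (c :: l).

Lemma gl_sum A s l : gl A s l -> sumn l = s.
Proof. by elim=> //= s0 c l0 _ _ cs _ _ ->; rewrite subnKC. Qed.

Lemma gl_gc A s l : gl A s l -> greedy_coins A s (size l).
Proof.
elim=> [|s0 c l0 H1 H2 H3 H4 _ IH]; first exact: greedy0.
exact: (greedyS H1 H2 H3 H4 IH).
Qed.

Lemma gl_single A s : A s.+1 -> gl A s.+1 [:: s.+1].
Proof.
move=> As; apply: glS => //; last by rewrite subnn; apply: gl0.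
Qed.

Lemma gl_step A (A1 : A 1) s l : gl A s l ->
  exists l', gl A s.+1 l' /\ pmerge A (1 :: l) l'.
Proof.
have yes : forall s l, gl A s l -> A s.+1 -> exists l', gl A s.+1 l' /\ pmerge A (1 :: l) l'.
  move=> s0 l0 G As; exists [:: s0.+1]; split; first exact: gl_single.
  exists [:: 1 :: l0]; split.
  - by rewrite /= cats0.
  - move=> g; rewrite inE => /eqP ->; split=> //; right.
    by rewrite /= (gl_sum G) add1n.
  - by rewrite /= (gl_sum G) add1n.
elim=> [|s0 c l0 H1 H2 H3 H4 G IH]; first exact: (yes 0 [::] (gl0 A) A1).
case: (classic (A s0.+1)) => As; first by apply: yes => //; apply: glS.
have [l0' [G' [gs0 [F O E]]]] := IH.
exists (c :: l0'); split.
  apply: glS => //; first exact: leqW.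
    move=> c' Ac' cs; apply: H4 => //; rewrite leq_eqVlt in cs.
    by case/orP: cs => [/eqP E'|//]; rewrite E' in Ac'.
  by rewrite subSn.
exists ([:: c] :: gs0); split.
- rewrite /=; apply: (perm_trans (_ : perm_eq _ ([:: c] ++ [:: 1] ++ l0))).
    by rewrite /= perm_cons.
  by rewrite perm_catCA; exact: perm_refl.
- move=> g; rewrite inE => /orP [/eqP -> | /O //]; split=> //; by left.
- by rewrite /= addn0 perm_cons.
Qed.

Lemma LB A (A1 : A 1) n s : (forall s', s' < s -> forall k, greedy_coins A s' k -> k < n) ->
  exists l, gl A s l /\ agg_reachable n A l.
Proof.
elim: s => [|s IH] H; first by exists [::]; split; constructor.
have [l [G R]] := IH (fun s' lt => H s' (leqW lt)).
have [l' [G' M]] := gl_step A1 G.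
exists l'; split=> //; apply: (reach_step R _ M).
exact: (H s (ltnSn s) _ (gl_gc G)).
Qed.

Lemma min_ex (P : nat -> Prop) : (exists s, P s) -> exists t, P t /\ forall s, s < t -> ~ P s.
Proof.
move=> [x0 Px].
suff H : forall m x, x <= m -> P x -> exists t, P t /\ forall s, s < t -> ~ P s.
  exact: (H x0 x0 (leqnn x0) Px).
elim=> [|m IH] s0 sm P0.
  by exists s0; split=> // s' lt; move: sm lt; rewrite leqn0 => /eqP ->.
case: (classic (exists s', s' < s0 /\ P s')) => [[s' [lt Ps']] | N].
  by apply: (IH s') => //; rewrite -ltnS; apply: leq_trans lt sm.
by exists s0; split=> // s' lt Ps'; apply: N; exists s'.
Qed.

Lemma gc0 A k : greedy_coins A 0 k -> k = 0.
Proof. move=> H; inversion H as [|s c k' H1]; first done. subst; by rewrite ltnn in H1. Qed.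

From mathcomp Require Import zify.

Lemma Gdec A (Apos : forall a, A a -> 0 < a) n t : G_is n A (Some t) -> 0 < n ->
  exists c, [/\ A c, c <= t, (forall c', A c' -> c' <= t -> c' <= c), 0 < t
     & G_is n.-1 A (Some (t - c))].
Proof.
case=> [[K [gK nK]] Mn] n0.
move: Mn nK; case: gK => [|s c k H1 H2 H3 H4 Hk] Mn nK; first by lia.
exists c; split=> //; split.
  by exists k; split=> //; lia.
move=> s' lt [k' [gk' nk']]; apply: (Mn (c + s')); first by lia.
exists k'.+1; split; last by lia.
apply: greedyS.
- by have := Apos c H2; lia.
- exact: H2.
- exact: leq_addr.
- by move=> c' Ac' le; apply: H4 => //; lia.
- by rewrite addKn.
Qed.

Lemma reach0 A p : agg_reachable 0 A p -> p = [::].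
Proof. by case=> // q p0 _ [Hs _]. Qed.

Lemma step_sum A n q p : agg_step n A q p -> sumn p = (sumn q).+1.
Proof.
case=> _ [gs [F O ->]].
by rewrite -sumn_flatten (perm_sumn F).
Qed.

Lemma UB A (Apos : forall a, A a -> 0 < a) (A1 : A 1) n : forall t, G_is n A (Some t) ->
  forall p, agg_reachable n A p -> sumn p <= t /\ (size p < n -> sumn p < t).
Proof.
elim: n => [|n IHn] t Gt.
  have t0 : t = 0.
    case: Gt => _ M; case: (posnP t) => // tp; exfalso; apply: (M 0 tp).
    by exists 0; split=> //; exact: greedy0.
  by move=> p /reach0 ->; rewrite t0.
have [c [Ac ct cmax tp Gn]] := Gdec Apos Gt (ltn0Sn n).
have IH := IHn _ Gn.
move=> p0; elim=> [|q p Hq [_ IHq] St]; first by split.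
have Hs := St; case: Hs => [Hs _].
have sq := IHq Hs.
have ep := step_sum St.
split; first by rewrite ep.
move=> sp.
case: (eqVneq p [::]) => [->|pn]; first by [].
have Rp := agg_reachS Hq St.
have [y [r [E Rr]]] := rexists Rp pn.
have Ay : A y by apply: (allA A1 Rp); rewrite (perm_mem E) mem_head.
have es : sumn p = y + sumn r by rewrite (perm_sumn E).
have yc : y <= c by apply: cmax => //; rewrite ep in es; lia.
have [_ sr] := IH r Rr.
have sz : size r < n by rewrite (perm_size E) in sp.
have := sr sz; lia.
Qed.

Theorem mainTheorem10 (A : nat -> Prop) (Apos : forall a, A a -> 0 < a) (A1 : A 1)
  (n : nat) (v : option nat) :
  Total_is n A v <-> G_is n A v.
Proof.
case: (classic (exists s, greedy_uses_at_least A s n)) => [Ex | NEx].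
  have [t [Gt Mt]] := min_ex Ex.
  have Gis : G_is n A (Some t) by split.
  have low : forall s', s' < t -> forall k, greedy_coins A s' k -> k < n.
    move=> s' lt k gk; rewrite ltnNge; apply/negP => nk; apply: (Mt s' lt).
    by exists k.
  have [l [Gl Rl]] := LB A1 low.
  have sl := gl_sum Gl.
  have U := UB Apos A1 Gis.
  case: v => [t'|]; last first.
    split=> H; exfalso; last by apply: (H t).
    have [p [Rp lt]] := H t; have [U1 _] := U p Rp; lia.
  have -> : G_is n A (Some t') <-> t' = t.
    split; last by move=> ->.
    case=> G' M'; case: (ltngtP t' t) => // lt; exfalso.
      exact: (Mt _ lt G').
    exact: (M' _ lt Gt).
  split.
    case=> U1 U2; have := U1 _ Rl; have := U2 t (fun p Rp => proj1 (U p Rp)); lia.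
  move=> ->; split; first by move=> p /U [].
  by move=> u Hu; have := Hu _ Rl; lia.
have low : forall s s', s' < s -> forall k, greedy_coins A s' k -> k < n.
  move=> s s' lt k gk; rewrite ltnNge; apply/negP => nk; apply: NEx.
  by exists s', k.
case: v => [t'|].
  split=> H; exfalso.
    have [l [Gl Rl]] := LB A1 (low t'.+2).
    case: H => U1 _; have := U1 _ Rl; rewrite (gl_sum Gl); lia.
  by apply: NEx; exists t'; case: H.
split=> _.
  by move=> s [k [gk nk]]; apply: NEx; exists s, k.
move=> u; have [l [Gl Rl]] := LB A1 (low u.+2).
by exists l; split=> //; rewrite (gl_sum Gl).
Qed.
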